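(* Let $R$ be a $v$-domain. Then every nonzero finitely generated ideal of $R$ is $v$-basic.
   Context: For a domain $R$ with quotient field $K$: $I^{-1}=(R:I)=\{x\in K:xI\subseteq R\}$, $I_v=(I^{-1})^{-1}$. $R$ is a $v$-domain if every nonzero finitely generated ideal $I$ satisfies $(II^{-1})_v=R$. For a nonzero ideal $I$, an ideal $J\subseteq I$ is a $v$-reduction of $I$ if $(JI^n)_v=(I^{n+1})_v$ for some integer $n\ge0$; $I$ is $v$-basic if every $v$-reduction $J$ of $I$ satisfies $J_v=I_v$. *)

(* Defs.v *)
From HB Require Import structures.
From mathcomp Require Import all_boot all_order all_algebra.
Set Implicit Arguments. Unset Strict Implicit. Unset Printing Implicit Defensive.
Import GRing.Theory.
Local Open Scope ring_scope.

Section VOps.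
Variable R : idomainType.
Local Notation K := {fraction R}.

Definition Rsub : K -> Prop := fun x => exists a : R, x = (@tofrac R a).

Definition img (I : R -> Prop) : K -> Prop :=
  fun x => exists2 a : R, I a & x = (@tofrac R a).

Definition colon (A : K -> Prop) : K -> Prop :=
  fun x => forall a, A a -> Rsub (x * a).

Definition vclos (A : K -> Prop) : K -> Prop := colon (colon A).

(* product AB: additive closure of the products ab, a in A, b in B
   (the usual product when A, B are R-submodules of K) *)
Inductive prodS (A B : K -> Prop) : K -> Prop :=
| prodS0 : prodS A B 0
| prodS_step a b w : A a -> B b -> prodS A B w -> prodS A B (a * b + w).

Fixpoint powS (A : K -> Prop) (n : nat) : K -> Prop :=
  match n with
  | O => Rsub
  | S m => prodS A (powS A m)
  end.

Definition seteq (A B : K -> Prop) : Prop := forall x, A x <-> B x.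

Definition is_ideal (I : R -> Prop) : Prop :=
  [/\ I 0, (forall a b, I a -> I b -> I (a + b)) & (forall r a, I a -> I (r * a))].

Definition nonzero_ideal (I : R -> Prop) : Prop := exists2 a, I a & a != 0.

Definition fin_gen (I : R -> Prop) : Prop :=
  exists s : seq R, forall a, I a <->
    exists c : seq R, size c = size s /\ a = \sum_(i < size s) c`_i * s`_i.

Definition v_domain : Prop :=
  forall I, is_ideal I -> nonzero_ideal I -> fin_gen I ->
    seteq (vclos (prodS (img I) (colon (img I)))) Rsub.

Definition v_reduction (J I : R -> Prop) : Prop :=
  is_ideal J /\ (forall a, J a -> I a) /\
  exists n : nat, seteq (vclos (prodS (img J) (powS (img I) n)))
                        (vclos (powS (img I) n.+1)).

Definition v_basic (I : R -> Prop) : Prop :=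
  forall J, v_reduction J I -> seteq (vclos (img J)) (vclos (img I)).

End VOps.

(* Main.v *)
Require Import Defs.
From HB Require Import structures.
From mathcomp Require Import all_boot all_order all_algebra.
Set Implicit Arguments. Unset Strict Implicit. Unset Printing Implicit Defensive.
Import GRing.Theory.
Local Open Scope ring_scope.

Section Aux.
Variable R : idomainType.
Local Notation K := {fraction R}.

Lemma Rsub0 : Rsub (0 : K). Proof. by exists 0; rewrite tofrac0. Qed.
Lemma Rsub1 : Rsub (1 : K). Proof. by exists 1; rewrite tofrac1. Qed.
Lemma RsubD (x y : K) : Rsub x -> Rsub y -> Rsub (x + y).
Proof. by move=> [a ->] [b ->]; exists (a + b); rewrite tofracD. Qed.
Lemma RsubM (x y : K) : Rsub x -> Rsub y -> Rsub (x * y).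
Proof. by move=> [a ->] [b ->]; exists (a * b); rewrite tofracM. Qed.

Lemma colon0 (X : K -> Prop) : colon X 0.
Proof. by move=> a _; rewrite mul0r; apply: Rsub0. Qed.
Lemma colonD (X : K -> Prop) y z : colon X y -> colon X z -> colon X (y + z).
Proof. by move=> hy hz a Xa; rewrite mulrDl; apply: RsubD; [apply: hy|apply: hz]. Qed.

Lemma colon_prod (A X : K -> Prop) x :
  colon (prodS A X) x <-> (forall a, A a -> colon X (x * a)).
Proof.
split.
  move=> h a Aa u Xu.
  have := h _ (prodS_step Aa Xu (prodS0 A X)).
  by rewrite addr0 mulrA.
move=> h w; elim=> [|a b w' Aa Xb _ IH]; first by rewrite mulr0; apply: Rsub0.
by rewrite mulrDr mulrA; apply: RsubD => //; apply: h.
Qed.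

Lemma colonR (y : K) : colon (@Rsub R) y <-> Rsub y.
Proof.
split; first by move=> h; have := h 1 Rsub1; rewrite mulr1.
by move=> hy a Ra; apply: RsubM.
Qed.

Lemma sub_vclos (A : K -> Prop) x : A x -> vclos A x.
Proof. by move=> Ax t Ct; rewrite mulrC; apply: Ct. Qed.

Lemma colon_anti (A B : K -> Prop) : (forall x, A x -> B x) ->
  forall x, colon B x -> colon A x.
Proof. by move=> h x hx a Aa; apply: hx; apply: h. Qed.

Lemma colon_vclos (A : K -> Prop) x : colon A x <-> colon (vclos A) x.
Proof.
split; first by move=> h; apply: sub_vclos.
by apply: colon_anti => y; apply: sub_vclos.
Qed.

Lemma colon_assoc (A I P : K -> Prop) x :
  colon (prodS A (prodS I P)) x <-> colon (prodS (prodS A I) P) x.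
Proof.
split.
  move=> /colon_prod h; apply/colon_prod.
  move=> w; elim=> [|a i w' Aa Ii _ IH]; first by rewrite mulr0; apply: colon0.
  rewrite mulrDr; apply: colonD => //.
  by move: (h a Aa) => /colon_prod h2; rewrite mulrA; apply: h2.
move=> /colon_prod h; apply/colon_prod => a Aa; apply/colon_prod => i Ii.
rewrite -mulrA; apply: h.
by rewrite -[a * i]addr0; apply: prodS_step => //; apply: prodS0.
Qed.

Lemma cancel_lem (I A B : K -> Prop) :
  (forall y, colon (prodS I (colon I)) y -> Rsub y) ->
  (forall x, colon (prodS A I) x -> colon (prodS B I) x) ->
  forall x, colon A x -> colon B x.
Proof.
move=> hv h x hx b Bb; apply: hv; apply/colon_prod => i Ii t Ct.
have : colon (prodS A I) (x * t).
  apply/colon_prod => a Aa j Ij.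
  have -> : x * t * a * j = (x * a) * (t * j) by rewrite -!mulrA; congr (_ * _);
    rewrite mulrCA.
  by apply: RsubM; [apply: hx | apply: Ct].
move/h/colon_prod/(_ b Bb)/(_ i Ii).
by have -> : x * t * b * i = x * b * i * t by rewrite -!mulrA; congr (_ * _);
  rewrite mulrCA; congr (_ * _); rewrite mulrC.
Qed.

Lemma cancel_pow (I : K -> Prop) :
  (forall y, colon (prodS I (colon I)) y -> Rsub y) ->
  forall n (A B : K -> Prop),
  (forall x, colon (prodS A (powS I n)) x -> colon (prodS B (powS I n)) x) ->
  forall x, colon A x -> colon B x.
Proof.
move=> hv; elim=> [|n IH] A B h.
  move=> x hx b Bb.
  have : colon (prodS A (@Rsub R)) x.
    apply/colon_prod => a Aa; apply/colonR; exact: hx.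
  by move/h/colon_prod/(_ b Bb)/colonR.
apply: (cancel_lem hv); apply: IH => x.
by move=> /colon_assoc /h /colon_assoc.
Qed.

End Aux.

Theorem proposition1p6 (R : idomainType) :
  v_domain R ->
  forall I : R -> Prop, is_ideal I -> nonzero_ideal I -> fin_gen I -> v_basic I.
Proof.
move=> hv I idI nzI fgI J [_ [JI [n hn]]].
have hv' : forall y, colon (prodS (img I) (colon (img I))) y -> Rsub y.
  move=> y /colon_vclos hy; apply/colonR.
  by move=> a Ra; apply: hy; apply/(hv I idI nzI fgI).
have hJI : forall x, img J x -> img I x by move=> x [a Ja ->]; exists a => //; apply: JI.
have key : forall x, colon (img J) x -> colon (img I) x.
  apply: (cancel_pow hv' (n := n)) => x hx.
  have h1 := proj1 (colon_vclos _ _) hx.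
  have h2 : colon (vclos (powS (img I) n.+1)) x.
    by apply: (colon_anti _ h1) => y /hn.
  exact: (proj2 (colon_vclos _ _) h2).
move=> x; split.
  by move=> h t Ct; apply: h; apply: colon_anti Ct.
by move=> h t Ct; apply: h; apply: key.
Qed.
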